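(* For $A \in \mathbf{DLat}$ and any regular cardinal $\kappa$, (1) $A\in\kappa\mathbf{H}$ if and only if $\mathrm{p}\mathcal{H} A \subseteq \mathcal{BL}_\kappa A$; (2) $A\in\mathbf{pro}\kappa\mathbf{H}$ if and only if $\mathrm{p}\mathcal{H} A \subseteq \mathcal{BL}_\kappa A \cap \mathcal{DM} A$.
   Context: $\mathbf{DLat}$ is the class of bounded distributive lattices. For $A\in\mathbf{DLat}$: $\mathcal{DM} A$ is the Dedekind-MacNeille completion (normal ideals $N=N^{u\ell}$); a join $\bigvee S$ existing in $A$ is distributive if $a\wedge\bigvee S=\bigvee\{a\wedge s: s\in S\}$ for all $a\in A$; $\mathcal{BL} A$ (the Bruns-Lakser completion) is the frame of D-ideals of $A$ (downsets closed under distributive joins of their subsets); $A$ is identified with its principal downsets, so $A\subseteq\mathcal{DM} A\subseteq\mathcal{BL} A$. For a regular cardinal $\kappa$, a $\kappa$-frame is a lattice in which all joins of sets of cardinality $<\kappa$ exist and are distributive, and $\mathcal{BL}_\kappa A$ is the sub-$\kappa$-frame of $\mathcal{BL} A$ generated by $A$. A relative annihilator is $\langle a,b\rangle=\{x\in A: a\wedge x\le b\}$, and $\mathcal{R} A$ is the set of relative annihilators. The proHeyting extension $\mathrm{p}\mathcal{H} A$ is the bounded sublattice of $\mathcal{BL} A$ generated by $\mathcal{R} A$. $A\in\kappa\mathbf{H}$ means $\mathcal{R} A\subseteq\mathcal{BL}_\kappa A$; $A\in\mathbf{pro}\kappa\mathbf{H}$ means $\mathcal{R} A\subseteq\mathcal{BL}_\kappa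 A\cap\mathcal{DM} A$. $A$ is proHeyting if $\mathcal{R} A\subseteq\mathcal{DM} A$, equivalently $\mathcal{DM} A=\mathcal{BL} A$. *)

(* Defs.v *)
(* bounded distributive lattices are mathcomp's
   [tbDistrLatticeType d]; subsets of A are Prop-valued predicates. *)
From mathcomp Require Import all_boot all_order.
Set Implicit Arguments.
Unset Strict Implicit.
Unset Printing Implicit Defensive.
Import Order.Theory.
Local Open Scope order_scope.

Definition card_le (S K : Type) : Prop := exists f : S -> K, injective f.
Definition card_lt (S K : Type) : Prop := card_le S K /\ ~ card_le K S.
Definition regular_cardinal (K : Type) : Prop :=
  card_le nat K /\
  forall (I : Type) (F : I -> Type),
    card_lt I K -> (forall i, card_lt (F i) K) -> card_lt {i : I & F i} K.

Section DLat.
Variables (d : Order.disp_t) (A : tbDistrLatticeType d).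

Definition pset := A -> Prop.

Definition pset_eq (P Q : pset) : Prop := forall x, P x <-> Q x.

Definition down (a : A) : pset := fun x => x <= a.

Definition downset (I : pset) : Prop := forall x y, x <= y -> I y -> I x.

Definition is_join (S : pset) (s : A) : Prop :=
  (forall x, S x -> x <= s) /\ (forall u, (forall x, S x -> x <= u) -> s <= u).

Definition dist_join (S : pset) (s : A) : Prop :=
  is_join S s /\
  forall a : A, is_join (fun y => exists2 x, S x & y = a `&` x) (a `&` s).

(* D-ideals: the elements of the Bruns-Lakser completion BL A *)
Definition D_ideal (I : pset) : Prop :=
  downset I /\
  forall (S : pset) (s : A), (forall x, S x -> I x) -> dist_join S s -> I s.

(* Dedekind-MacNeille completion: normal ideals N = N^{ul} *)
Definition upper (N : pset) : pset := fun u => forall x, N x -> x <= u.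
Definition lower (U : pset) : pset := fun x => forall u, U u -> x <= u.
Definition DM (N : pset) : Prop := pset_eq (lower (upper N)) N.

Definition BLmeet (P Q : pset) : pset := fun x => P x /\ Q x.
Definition Dgen (U : pset) : pset :=
  fun x => forall I, D_ideal I -> (forall y, U y -> I y) -> I x.
Definition BLjoin (J : Type) (F : J -> pset) : pset :=
  Dgen (fun y => exists j, F j y).
Definition BLtop : pset := fun _ => True.
Definition BLbot : pset := Dgen (fun _ => False).

Definition ext_closed (C : pset -> Prop) : Prop :=
  forall P Q, pset_eq P Q -> C P -> C Q.

Definition kframe_closed (K : Type) (C : pset -> Prop) : Prop :=
  ext_closed C /\
  (forall a, C (down a)) /\
  (forall P Q, C P -> C Q -> C (BLmeet P Q)) /\
  (forall (J : Type) (F : J -> pset),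
      card_lt J K -> (forall j, C (F j)) -> C (BLjoin F)).

(* BL_kappa A : the sub-kappa-frame of BL A generated by A (kappa = |K|) *)
Definition BLk (K : Type) (P : pset) : Prop :=
  forall C, kframe_closed K C -> C P.

Definition rel_ann (a b : A) : pset := fun x => a `&` x <= b.

Definition RA (P : pset) : Prop := exists a b, pset_eq P (rel_ann a b).

Definition pH_closed (C : pset -> Prop) : Prop :=
  ext_closed C /\
  (forall P, RA P -> C P) /\
  C BLtop /\ C BLbot /\
  (forall P Q, C P -> C Q -> C (BLmeet P Q)) /\
  (forall P Q, C P -> C Q -> C (BLjoin (fun b : bool => if b then P else Q))).

Definition pH (P : pset) : Prop := forall C, pH_closed C -> C P.

Definition in_kH (K : Type) : Prop := forall P, RA P -> BLk K P.
Definition in_prokH (K : Type) : Prop := forall P, RA P -> BLk K P /\ DM P.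

End DLat.

(* Main.v *)
Require Import Defs.
From mathcomp Require Import all_boot all_order.
Import Order.Theory.
Local Open Scope order_scope.

Section Aux.
Variables (d : Order.disp_t) (A : tbDistrLatticeType d) (K : Type).

Lemma K_inf (hK : regular_cardinal K) : card_lt bool K /\ card_lt False K.
Proof.
case: hK => [[f finj] _].
have nob : ~ card_le K bool.
  case=> g ginj.
  have h : injective (g \o f) by move=> x y /= /ginj /finj.
  have e01 : (g \o f) 0 != (g \o f) 1 by apply/eqP => /h.
  have e02 : (g \o f) 0 != (g \o f) 2 by apply/eqP => /h.
  have e12 : (g \o f) 1 != (g \o f) 2 by apply/eqP => /h.
  move: e01 e02 e12; case: ((g \o f) 0); case: ((g \o f) 1); case: ((g \o f) 2) => //.
split; split => //.
- exists (fun b : bool => f (if b then 0 else 1)).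
  by move=> [] [] // /finj.
- by exists (fun x : False => match x with end) => [[]].
- by case=> g _; case: (g (f 0)).
Qed.

Lemma BLk_ext (P Q : pset A) : pset_eq P Q -> BLk (A:=A) K P -> BLk (A:=A) K Q.
Proof. by move=> e HP C HC; apply: (HC.1 P Q e); apply: HP. Qed.

Lemma BLk_closed (hK : regular_cardinal K) :
  (forall P : pset A, RA P -> BLk K P) -> pH_closed (BLk K (A:=A)).
Proof.
move=> HR; have [Kb Kf] := K_inf hK.
split; first by move=> P Q; apply: BLk_ext.
split => //.
split.
  apply: (@BLk_ext (down \top)); first by move=> x; split => // _; rewrite /down lex1.
  by move=> C HC; apply: HC.2.1.
split.
  apply: (@BLk_ext (BLjoin (fun j : False => match j with end))).
    by move=> x; split => H I HI HU; apply: H => // y; case => //; case.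
  by move=> C HC; apply: HC.2.2.2 => //; case.
split.
  by move=> P Q HP HQ C HC; apply: HC.2.2.1; [apply: HP | apply: HQ].
move=> P Q HP HQ C HC; apply: HC.2.2.2 => //; case; [apply: HP | apply: HQ] => //.
Qed.

Lemma Dideal_closed : pH_closed (D_ideal (A:=A)).
Proof.
have Dgen_D : forall U : pset A, D_ideal (Dgen U).
  move=> U; split.
    by move=> x y xy Hy I HI HU; apply: HI.1 xy _; apply: Hy.
  by move=> S s HS Hs I HI HU; apply: HI.2 Hs => x /HS; apply.
split.
  move=> P Q e [HPd HPj]; split.
    by move=> x y xy /e Hy; apply/e; apply: HPd xy Hy.
  by move=> S s HS Hs; apply/e; apply: HPj Hs => x /HS /e.
split.
  move=> P [a [b e]]; split.
    move=> x y xy /e Hy; apply/e; rewrite /rel_ann; apply: le_trans Hy.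
    by rewrite lexI leIl /= (le_trans (leIr _ _) xy).
  move=> S s HS [_ Hd]; apply/e; rewrite /rel_ann.
  apply: (Hd a).2 => y [z Sz ->]; exact/e/HS.
split; first by split.
split; first by apply: Dgen_D.
split; last by move=> P Q _ _; apply: Dgen_D.
move=> P Q [Pd Pj] [Qd Qj]; split.
  by move=> x y xy [Py Qy]; split; [apply: Pd xy Py|apply: Qd xy Qy].
by move=> S s HS Hs; split; [apply: Pj Hs => x /HS [] | apply: Qj Hs => x /HS []].
Qed.

Lemma Dideal_DM (H : forall a b : A, DM (rel_ann a b)) (I : pset A) :
  D_ideal I -> DM I.
Proof.
move=> HI x; split; last by move=> Ix u Hu; apply: Hu.
move=> Hx.
have key : forall c u, (forall i, I i -> c `&` (x `&` i) <= u) -> c `&` x <= u.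
  move=> c u Hi.
  have : rel_ann (c `&` x) u x.
    apply: (H (c `&` x) u x).1 => v Hv; apply: Hx => i Ii; apply: Hv.
    by rewrite /rel_ann -meetA; apply: Hi.
  by rewrite /rel_ann -meetA meetxx.
apply: (HI.2 (fun y => exists2 i, I i & y = x `&` i) x).
  by move=> y [i Ii ->]; apply: HI.1 (leIr _ _) Ii.
split.
  split; first by move=> y [i _ ->]; apply: leIl.
  move=> u Hu; rewrite -[x]meet1x; apply: key => i Ii; rewrite meet1x.
  by apply: Hu; exists i.
move=> a; split.
  by move=> y [z [i _ ->] ->]; rewrite meetA leIl.
move=> u Hu; apply: key => i Ii; apply: Hu; exists (x `&` i) => //; by exists i.
Qed.

End Aux.

Theorem theorem4p23 (d : Order.disp_t) (A : tbDistrLatticeType d) (K : Type)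
  (hK : regular_cardinal K) :
  (in_kH A K <-> (forall P : pset A, pH P -> BLk K P)) /\
  (in_prokH A K <-> (forall P : pset A, pH P -> BLk K P /\ DM P)).
Proof.
have RpH : forall P : pset A, RA P -> pH P by move=> P HP C HC; apply: HC.2.1.
have fwd1 : in_kH A K -> forall P : pset A, pH P -> BLk K P.
  by move=> H P HP; apply: HP; apply: BLk_closed.
split; split.
- exact: fwd1.
- by move=> H P /RpH; apply: H.
- move=> H P HP; split.
    by apply: fwd1 HP => Q /H [].
  apply: Dideal_DM; last by apply: HP; apply: Dideal_closed.
  by move=> a b; apply: (H _ _).2; exists a, b.
- by move=> H P /RpH; apply: H.
Qed.
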